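(* Let $(X,d)$ be a complete metric space and let $G:X\times X\to X$ be a mapping such that (i) $G(x,x)=x$ for all $x\in X$, and (ii) for $x,y\in X$, $G(x,y)=x$ implies $y=x$. Let $T:X\to P_{cl}(X)$ be a multivalued operator with $SFix(T)\neq\emptyset$, let $x^*\in SFix(T)$, and let $T_G(x)=\{G(x,u):u\in T(x)\}$ be the admissible perturbation of $T$ corresponding to $G$. Suppose there exists $k\in(0,1)$ such that $$H(T_G(x),\{x^*\})\le k\,d(x,x^* )\quad\text{for all }x\in X.$$ Then $$H(T_G(Y),\{x^*\})\le k\,H(Y,\{x^*\})\quad\text{for all }Y\in P_{cl}(X).$$
   Context: $P(X)$ denotes the family of nonempty subsets of $X$ and $P_{cl}(X)$ the family of nonempty closed subsets. $SFix(T)=\{x\in X:T(x)=\{x\}\}$. For $A,B\in P(X)$: $D(a,B)=\inf\{d(a,b):b\in B\}$, $e(A,B)=\sup\{D(a,B):a\in A\}$, $H(A,B)=\max\{e(A,B),e(B,A)\}$ (possibly $+\infty$). For $Y\subseteq X$, $T_G(Y)=\bigcup_{y\in Y}T_G(y)$. *)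

(* Defs.v *)
From HB Require Import structures.
From mathcomp Require Import all_boot all_order all_algebra.
From mathcomp Require Import all_classical all_reals.
From mathcomp Require Import ereal.
Set Implicit Arguments. Unset Strict Implicit. Unset Printing Implicit Defensive.
Import Order.TTheory GRing.Theory Num.Theory.
Local Open Scope classical_set_scope.
Local Open Scope ring_scope.

Definition is_metric (R : realType) (X : Type) (d : X -> X -> R) : Prop :=
  (forall x y, 0 <= d x y) /\
  (forall x y, d x y = 0 <-> x = y) /\
  (forall x y, d x y = d y x) /\
  (forall x y z, d x z <= d x y + d y z).

Definition cauchy_seq (R : realType) (X : Type) (d : X -> X -> R) (u : nat -> X) : Prop :=
  forall eps : R, 0 < eps -> exists N : nat, forall m n : nat,
    (N <= m)%N -> (N <= n)%N -> d (u m) (u n) < eps.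

Definition converges_to (R : realType) (X : Type) (d : X -> X -> R) (u : nat -> X) (l : X) : Prop :=
  forall eps : R, 0 < eps -> exists N : nat, forall n : nat, (N <= n)%N -> d (u n) l < eps.

Definition complete_metric (R : realType) (X : Type) (d : X -> X -> R) : Prop :=
  forall u : nat -> X, cauchy_seq d u -> exists l, converges_to d u l.

Definition closed_in (R : realType) (X : Type) (d : X -> X -> R) (A : set X) : Prop :=
  forall (u : nat -> X) (l : X), (forall n, A (u n)) -> converges_to d u l -> A l.

Definition Pcl (R : realType) (X : Type) (d : X -> X -> R) (A : set X) : Prop :=
  A !=set0 /\ closed_in d A.

Definition SFix (X : Type) (T : X -> set X) : set X := [set x | T x = [set x]].

Local Open Scope ereal_scope.
Definition gapD (R : realType) (X : Type) (d : X -> X -> R) (a : X) (B : set X) : \bar R :=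
  ereal_inf [set (d a b)%:E | b in B].
Definition excess (R : realType) (X : Type) (d : X -> X -> R) (A B : set X) : \bar R :=
  ereal_sup [set gapD d a B | a in A].
Definition hausdorff (R : realType) (X : Type) (d : X -> X -> R) (A B : set X) : \bar R :=
  maxe (excess d A B) (excess d B A).
Local Close Scope ereal_scope.

Definition TG (X : Type) (G : X -> X -> X) (T : X -> set X) (x : X) : set X :=
  [set G x u | u in T x].
Definition TG_set (X : Type) (G : X -> X -> X) (T : X -> set X) (Y : set X) : set X :=
  \bigcup_(y in Y) TG G T y.

(* Main.v *)
Require Import Defs.
From HB Require Import structures.
From mathcomp Require Import all_boot all_order all_algebra.
From mathcomp Require Import all_classical all_reals.
From mathcomp Require Import ereal.
Import Order.TTheory GRing.Theory Num.Theory.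
Local Open Scope classical_set_scope.
Local Open Scope ring_scope.

Lemma H_lower (R : realType) (X : Type) (d : X -> X -> R) (A : set X) (x y : X) :
  A y -> ((d y x)%:E <= hausdorff d A [set x])%E.
Proof.
move=> Ay; rewrite /hausdorff.
apply: (@le_trans _ _ (excess d A [set x])); last by rewrite le_max lexx.
apply: (@le_trans _ _ (gapD d y [set x])).
  by apply: le_ereal_inf_tmp => _ [b -> <-].
by apply: ereal_sup_ubound; exists y.
Qed.

Lemma H_upper (R : realType) (X : Type) (d : X -> X -> R) (hd : is_metric d)
  (A : set X) (x : X) (M : \bar R) :
  A !=set0 -> (forall a, A a -> ((d a x)%:E <= M)%E) ->
  (hausdorff d A [set x] <= M)%E.
Proof.
case: hd => _ [_ [hsym _]].
move=> [a0 Aa0] hM; rewrite /hausdorff ge_max; apply/andP; split.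
  apply: ge_ereal_sup => _ [a Aa <-].
  apply: (@le_trans _ _ (d a x)%:E); last exact: hM.
  by apply: ge_ereal_inf; exists (d a x)%:E => //; exists x.
apply: ge_ereal_sup => _ [z -> <-].
apply: ge_ereal_inf; exists (d x a0)%:E; first by exists a0.
by rewrite hsym; exact: hM.
Qed.

Theorem mainTheorem2 (R : realType) (X : Type) (d : X -> X -> R)
  (hd : is_metric d) (hcomplete : complete_metric d)
  (G : X -> X -> X)
  (hG1 : forall x, G x x = x)
  (hG2 : forall x y, G x y = x -> y = x)
  (T : X -> set X) (hT : forall x, Pcl d (T x))
  (hSFix : SFix T !=set0)
  (xstar : X) (hxstar : SFix T xstar)
  (k : R) (hk0 : 0 < k) (hk1 : k < 1)
  (hcontr : forall x, (hausdorff d (TG G T x) [set xstar] <= (k * d x xstar)%:E)%E) :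
  forall Y : set X, Pcl d Y ->
    (hausdorff d (TG_set G T Y) [set xstar] <= k%:E * hausdorff d Y [set xstar])%E.
Proof.
move=> Y [[y0 Yy0] _].
apply: H_upper => //.
  have [[u Tu] _] := hT y0.
  by exists (G y0 u); exists y0 => //; exists u.
move=> z [y Yy Hz].
apply: (@le_trans _ _ (hausdorff d (TG G T y) [set xstar])); first exact: H_lower.
apply: (le_trans (hcontr y)).
rewrite EFinM; apply: lee_wpmul2l; first by rewrite lee_fin ltW.
exact: H_lower.
Qed.
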